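(* Let $r$ be a positive integer. Every $r$-outdegree-critical tournament is strongly connected.
   Context: A tournament is an orientation of a finite complete graph. A digraph is called $r$-outdegree-critical if it has minimum outdegree $r$ and the deletion of any vertex decreases the minimum outdegree (i.e., the minimum outdegree of the digraph obtained by deleting any single vertex is less than $r$). A digraph is strongly connected if for every ordered pair of vertices $x,y$ there is a directed path from $x$ to $y$. *)

(* Defs.v *)
From mathcomp Require Import all_boot.
Set Implicit Arguments. Unset Strict Implicit. Unset Printing Implicit Defensive.

(* A digraph on a finite vertex type T is given by its arc relation e : rel T
   (x -> y iff e x y).  Sub-digraphs induced by a vertex set S : {set T}. *)

Definition tournament (T : finType) (e : rel T) : Prop :=
  (forall x, ~~ e x x) /\
  (forall x y, x != y -> (e x y || e y x) && ~~ (e x y && e y x)).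

Definition outdeg_in (T : finType) (e : rel T) (S : {set T}) (x : T) : nat :=
  #|[set y in S | e x y]|.

Definition min_outdeg_in (T : finType) (e : rel T) (S : {set T}) (r : nat) : Prop :=
  (forall x, x \in S -> r <= outdeg_in e S x) /\
  (exists2 x, x \in S & outdeg_in e S x = r).

Definition min_outdeg_lt_in (T : finType) (e : rel T) (S : {set T}) (r : nat) : Prop :=
  exists2 x, x \in S & outdeg_in e S x < r.

Definition outdeg_critical (T : finType) (e : rel T) (r : nat) : Prop :=
  min_outdeg_in e [set: T] r /\
  (forall v : T, min_outdeg_lt_in e [set~ v] r).

Definition strongly_connected (T : finType) (e : rel T) : Prop :=
  forall x y : T, connect e x y.

(* Main.v *)
Require Import Defs.
From mathcomp Require Import all_boot.

Theorem lemma2p2 (T : finType) (e : rel T) (r : nat) :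
  0 < r -> tournament e -> outdeg_critical e r -> strongly_connected e.
Proof.
move=> _ [irr tot] [[minr _] crit] x y.
apply/negPn/negP => nxy.
set A := [set z | connect e x z].
have yA : y \notin A by rewrite inE.
have clos : forall a w, a \in A -> e a w -> w \in A.
  by move=> a w; rewrite !inE => Ha Haw; apply: connect_trans Ha (connect1 Haw).
have cardA : r <= #|A|.
  apply: leq_trans (minr x (in_setT x)) _; apply: subset_leq_card.
  apply/subsetP => z; rewrite inE => /andP [_ Hxz].
  by apply: (clos x) => //; rewrite inE connect0.
have [w] := crit y; rewrite /outdeg_in => wy; apply/negP; rewrite -leqNgt.
case: (boolP (w \in A)) => wA.
  apply: leq_trans (minr w (in_setT w)) _; apply: subset_leq_card.
  apply/subsetP => z; rewrite inE => /andP [_ Hwz].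
  rewrite !inE Hwz andbT; apply/negP => /eqP zy.
  by move: yA; rewrite -zy (clos w z wA Hwz).
apply: leq_trans cardA _; apply: subset_leq_card.
apply/subsetP => a aA; rewrite !inE.
have ay : a != y by apply/negP => /eqP ay; move: yA; rewrite -ay aA.
rewrite ay /=.
have wa : w != a by apply/negP => /eqP wa; move: wA; rewrite wa aA.
move: (tot w a wa) => /andP [/orP [//|Haw] _].
by move: wA; rewrite (clos a w aA Haw).
Qed.
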